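(* Let $k$ be a field of characteristic $p>2$ ($p$ prime). Let $m\ge1$ and $u_1,u_2,\ldots,u_{2m},v\in k_1\langle X\rangle$. Then for any $i$ with $1\le i\le 2m$, $$w_m(u_1,\ldots,u_i+v,\ldots,u_{2m})\equiv w_m(u_1,\ldots,u_i,\ldots,u_{2m})+w_m(u_1,\ldots,v,\ldots,u_{2m})\pmod{S^2+T^{(3)}},$$ where in the last term $v$ occupies the $i$-th argument.
   Context: $X=\{x_i\mid i\ge0\}$ is countably infinite; $k_1\langle X\rangle$ is the free unitary associative $k$-algebra on $X$. $[a,b]=ab-ba$, $[a,b,c]=[[a,b],c]$. A $T$-space is a linear subspace invariant under all endomorphisms of $k_1\langle X\rangle$; a $T$-ideal is a $T$-space that is an ideal. $T^{(3)}$ is the $T$-ideal generated by $[x_1,x_2,x_3]$, and $S^2$ is the $T$-space generated by $[x_1,x_2]$. $\kappa(u,v)=[u,v]u^{p-1}v^{p-1}$, $w_m=\prod_{r=1}^m\kappa(x_{2r-1},x_{2r})$, and $w_m(u_1,\ldots,u_{2m})$ denotes the image of $w_m$ under the endomorphism sending $x_j\mapsto u_j$ for $1\le j\le 2m$. *)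

(* Defs.v *)
From HB Require Import structures.
From mathcomp Require Import all_boot all_order all_algebra.
From mathcomp Require Import finmap.
From mathcomp.multinomials Require Import monalg.
Set Implicit Arguments. Unset Strict Implicit. Unset Printing Implicit Defensive.
Import GRing.Theory.
Local Open Scope ring_scope.

(* The free unitary associative k-algebra k_1<X> on X = {x_i | i >= 0}:
   the monoid algebra of the free monoid on nat (words = {fmonom nat}). *)
Definition FreeAlg (k : fieldType) := {malg k[{fmonom nat}]}.

Definition xvar (k : fieldType) (i : nat) : FreeAlg k := << fmu i >>.

Definition comm (R : ringType) (a b : R) : R := a * b - b * a.

Section Tnotions.
Variable k : fieldType.
Local Notation A := (FreeAlg k).

Definition is_subspace (V : A -> Prop) : Prop :=
  [/\ V 0, (forall a b, V a -> V b -> V (a + b)) &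
      (forall (c : k) a, V a -> V (c *: a))].

Definition endo_invariant (V : A -> Prop) : Prop :=
  forall (phi : {lrmorphism A -> A}) (a : A), V a -> V (phi a).

Definition is_Tspace (V : A -> Prop) : Prop := is_subspace V /\ endo_invariant V.

Definition is_ideal (V : A -> Prop) : Prop :=
  forall a b : A, V b -> V (a * b) /\ V (b * a).

Definition is_Tideal (V : A -> Prop) : Prop := is_Tspace V /\ is_ideal V.

Definition Tspace_gen (G : A -> Prop) (f : A) : Prop :=
  forall V, is_Tspace V -> (forall g, G g -> V g) -> V f.

Definition Tideal_gen (G : A -> Prop) (f : A) : Prop :=
  forall V, is_Tideal V -> (forall g, G g -> V g) -> V f.

Definition T3 : A -> Prop :=
  Tideal_gen (fun g => g = comm (comm (xvar k 1) (xvar k 2)) (xvar k 3)).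

Definition S2 : A -> Prop :=
  Tspace_gen (fun g => g = comm (xvar k 1) (xvar k 2)).

Definition S2_plus_T3 (f : A) : Prop :=
  exists a b, S2 a /\ T3 b /\ f = a + b.

Definition kappa (p : nat) (u v : A) : A :=
  comm u v * u ^+ p.-1 * v ^+ p.-1.

(* w_m(u_1,...,u_2m) = prod_{r=1}^m kappa(u_{2r-1}, u_{2r})
   (the image of w_m under x_j |-> u_j); u : nat -> A gives u_j = u j. *)
Definition wm (p m : nat) (u : nat -> A) : A :=
  \prod_(r < m) kappa p (u (2 * r).+1) (u (2 * r).+2).

End Tnotions.

(* Main.v *)
Require Import Defs.
From HB Require Import structures.
From mathcomp Require Import all_boot all_order all_algebra.
From mathcomp Require Import zify.
From mathcomp Require Import finmap.
From mathcomp.multinomials Require Import monalg.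
Import GRing.Theory.
Local Open Scope ring_scope.

Section Subst.
Variable k : fieldType.
Local Notation A := (FreeAlg k).
Variable u : nat -> A.

Lemma scal_comm (c : k) (g : A) : g * c%:MP = c%:MP * g.
Proof.
rewrite mul_malgC malgM_def fgmulgU malgZ_def /fgscale.
by apply: eq_bigr => k' _; rewrite mulrC mulm1.
Qed.

Definition hmap (w : {fmonom nat}) : A := \prod_(i <- (w : seq nat)) u i.

Lemma hmap_mm : mmorphism hmap.
Proof.
split; last by rewrite /hmap fm1 big_nil.
by move=> x y; rewrite /hmap fmM big_cat.
Qed.

HB.instance Definition _ := isMultiplicative.Build _ _ hmap hmap_mm.

Definition subst : A -> A := mmap (@malgC {fmonom nat} k) hmap.

HB.instance Definition _ := GRing.Additive.copy subst subst.

Lemma subst_mult : multiplicative subst.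
Proof.
apply: commr_mmap_is_multiplicative => g m m'.
by rewrite /GRing.comm /= scal_comm.
Qed.

HB.instance Definition _ := GRing.isMultiplicative.Build A A subst subst_mult.

Lemma subst_scal : scalable subst.
Proof. by move=> c g; rewrite /subst mmapZ /= mul_malgC. Qed.

HB.instance Definition _ := GRing.isScalable.Build k A A *:%R subst subst_scal.

Definition substL : {lrmorphism A -> A} := subst.

Lemma substL_x i : substL (xvar k i) = u i.
Proof. by rewrite /= /subst /xvar mmapU /= mul1r /hmap fmU big_seq1. Qed.
End Subst.

Section Alg.
Variable R : ringType.
Variable I : R -> Prop.
Hypothesis I0 : I 0.
Hypothesis ID : forall a b, I a -> I b -> I (a + b).
Hypothesis IN : forall a, I a -> I (- a).
Hypothesis IMl : forall a b, I b -> I (a * b).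
Hypothesis IMr : forall a b, I b -> I (b * a).
Hypothesis I3 : forall x y z, I (comm (comm x y) z).

Local Notation cm := (@comm R).

Lemma IB a b : I a -> I b -> I (a - b).
Proof. by move=> ? ?; apply: ID => //; apply: IN. Qed.

Lemma Ieq a b : a = b -> I a -> I b.
Proof. by move=> ->. Qed.

Lemma commMl x y z : cm (x * y) z = x * cm y z + cm x z * y.
Proof.
rewrite /comm mulrBr mulrBl !mulrA addrA; congr (_ + _).
by rewrite -!mulrA subrK.
Qed.

Lemma commMr x y z : cm x (y * z) = cm x y * z + y * cm x z.
Proof.
rewrite /comm mulrBr mulrBl !mulrA addrA; congr (_ - _).
by rewrite subrK.
Qed.

Lemma commN x y : cm y x = - cm x y.
Proof. by rewrite /comm opprB. Qed.

Lemma commDl x y z : cm (x + y) z = cm x z + cm y z.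
Proof. by rewrite /comm mulrDl mulrDr opprD addrACA. Qed.

Lemma commDr x y z : cm x (y + z) = cm x y + cm x z.
Proof. by rewrite /comm mulrDl mulrDr opprD addrACA. Qed.

Lemma commNl x y : cm (- x) y = - cm x y.
Proof. by rewrite /comm mulNr mulrN opprB opprK addrC. Qed.

Lemma commBl x y z : cm (x - y) z = cm x z - cm y z.
Proof. by rewrite commDl commNl. Qed.

Lemma commxx x : cm x x = 0.
Proof. by rewrite /comm subrr. Qed.

Lemma comm1l x : cm 1 x = 0.
Proof. by rewrite /comm mul1r mulr1 subrr. Qed.

Lemma comm0l x : cm 0 x = 0.
Proof. by rewrite /comm mul0r mulr0 subrr. Qed.

Lemma commMnl x y n : cm (x *+ n) y = cm x y *+ n.
Proof. by rewrite /comm mulrnAl mulrnAr mulrnBl. Qed.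

Lemma commsuml (J : Type) (r : seq J) (F : J -> R) y :
  cm (\sum_(j <- r) F j) y = \sum_(j <- r) cm (F j) y.
Proof.
elim: r => [|a r IH]; first by rewrite !big_nil comm0l.
by rewrite !big_cons commDl IH.
Qed.

Lemma Isum (J : Type) (r : seq J) (F : J -> R) :
  (forall j, I (F j)) -> I (\sum_(j <- r) F j).
Proof.
move=> H; elim: r => [|a r IH]; first by rewrite big_nil.
by rewrite big_cons; apply: ID.
Qed.

Lemma IMn a n : I a -> I (a *+ n).
Proof. by move=> Ia; elim: n => [|n IH]; rewrite ?mulr0n // mulrS; apply: ID. Qed.

Definition Cm c := forall y, I (cm c y).

Lemma Cm_comm x y : Cm (cm x y).
Proof. by move=> z; apply: I3. Qed.

Lemma Cm1 : Cm 1.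
Proof. by move=> y; rewrite comm1l. Qed.

Lemma CmM c d : Cm c -> Cm d -> Cm (c * d).
Proof. by move=> Hc Hd y; rewrite commMl; apply: ID; [apply: IMl|apply: IMr]. Qed.

Lemma Cm_prod (J : Type) (r : seq J) (F : J -> R) :
  (forall j, Cm (F j)) -> Cm (\prod_(j <- r) F j).
Proof.
move=> H; elim: r => [|a r IH]; first by rewrite big_nil; exact: Cm1.
by rewrite big_cons; apply: CmM.
Qed.

Lemma Cm_swap c y z : Cm c -> I (z * (c * y) - z * (y * c)).
Proof. by move=> H; rewrite -mulrBr; apply: IMl; apply: H. Qed.

Lemma F2 x y z : I (cm x y * cm x z).
Proof.
have E : cm x y * cm x z = cm (cm x (y * x)) z - cm (cm x y) z * x.
  have -> : cm x (y * x) = cm x y * x by rewrite commMr commxx mulr0 addr0.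
  by rewrite commMl addrK.
by rewrite E; apply: IB => //; apply: IMr.
Qed.

Definition eqI a b := I (a - b).
Local Infix "=I" := eqI (at level 70).

Lemma eqI_refl a : a =I a.
Proof. by rewrite /eqI subrr. Qed.
Lemma eqI_eq a b : a = b -> a =I b.
Proof. by move=> ->; apply: eqI_refl. Qed.
Lemma eqI_sym a b : a =I b -> b =I a.
Proof. by rewrite /eqI => H; rewrite -opprB; apply: IN. Qed.
Lemma eqI_trans a b c : a =I b -> b =I c -> a =I c.
Proof.
rewrite /eqI => H1 H2; have -> : a - c = (a - b) + (b - c) by rewrite addrA subrK.
exact: ID.
Qed.
Lemma eqI_D a b c d : a =I b -> c =I d -> a + c =I b + d.
Proof. by rewrite /eqI => H1 H2; rewrite opprD addrACA; apply: ID. Qed.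
Lemma eqI_N a b : a =I b -> - a =I - b.
Proof. by rewrite /eqI => H; rewrite -opprD; apply: IN. Qed.
Lemma eqI_B a b c d : a =I b -> c =I d -> a - c =I b - d.
Proof. by move=> ? ?; apply: eqI_D => //; apply: eqI_N. Qed.
Lemma eqI_Ml a b c : a =I b -> c * a =I c * b.
Proof. by rewrite /eqI -mulrBr => H; apply: IMl. Qed.
Lemma eqI_Mr a b c : a =I b -> a * c =I b * c.
Proof. by rewrite /eqI -mulrBl => H; apply: IMr. Qed.
Lemma eqI_Mn a b n : a =I b -> a *+ n =I b *+ n.
Proof. by rewrite /eqI -mulrnBl => H; apply: IMn. Qed.
Lemma eqI_I a b : I (a - b) -> a =I b.
Proof. by []. Qed.
Lemma eqI_sum (J : Type) (r : seq J) (F G : J -> R) :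
  (forall j, F j =I G j) -> \sum_(j <- r) F j =I \sum_(j <- r) G j.
Proof.
move=> H; elim: r => [|a r IH]; first by rewrite !big_nil; apply: eqI_refl.
by rewrite !big_cons; apply: eqI_D.
Qed.
Lemma eqI_0 a : I a -> a =I 0.
Proof. by rewrite /eqI subr0. Qed.

Lemma Cm_eq c y : Cm c -> c * y =I y * c.
Proof. by move=> H; apply: H. Qed.

Lemma good_mul c v Z1 Z2 : Cm c -> I (c * cm Z1 v) -> I (c * cm Z2 v) ->
  I (c * cm (Z1 * Z2) v).
Proof.
move=> Hc H1 H2; rewrite commMl mulrDr mulrA mulrA.
apply: ID; last exact: IMr.
have -> : c * Z1 * cm Z2 v = cm c Z1 * cm Z2 v + Z1 * (c * cm Z2 v).
  by rewrite mulrA /comm [X in _ = X + _]mulrBl subrK.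
by apply: ID; [apply: IMr; apply: Hc | apply: IMl].
Qed.

Lemma good_exp c v Z n : Cm c -> I (c * cm Z v) -> I (c * cm (Z ^+ n) v).
Proof.
move=> Hc H; elim: n => [|n IH]; first by rewrite expr0 comm1l mulr0.
by rewrite exprS; apply: good_mul.
Qed.

Definition kap n s t := cm s t * s ^+ n * t ^+ n.

Lemma kappa_central n s t : Cm (kap n s t).
Proof.
move=> y; rewrite /kap -mulrA commMl; apply: ID; last first.
  by apply: IMr; apply: I3.
apply: good_mul; first exact: Cm_comm.
  by apply: good_exp; [exact: Cm_comm| exact: F2].
apply: good_exp; first exact: Cm_comm.
by rewrite (commN t s) mulNr; apply: IN; apply: F2.
Qed.

Lemma kappa_swap n s t : kap n t s =I - kap n s t.
Proof.
rewrite /eqI opprK /kap (commN s t) mulNr mulNr addrC -!mulrA -mulrBr.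
have -> : s ^+ n * t ^+ n - t ^+ n * s ^+ n = cm (s ^+ n) (t ^+ n) by [].
apply: good_exp; first exact: Cm_comm.
rewrite (commN (t ^+ n) s) mulrN; apply: IN.
apply: good_exp; first exact: Cm_comm.
by rewrite (commN t s) mulNr; apply: IN; apply: F2.
Qed.

Lemma comm_exp x w n : cm (x ^+ n.+1) w =I (cm x w * x ^+ n) *+ n.+1.
Proof.
elim: n => [|n IH]; first by rewrite expr1 expr0 mulr1; apply: eqI_refl.
rewrite [x ^+ n.+2]exprS commMl [in X in _ =I X]mulrSr; apply: eqI_D; last exact: eqI_refl.
apply: eqI_trans (eqI_Ml _ _ x IH) _; rewrite mulrnAr; apply: eqI_Mn.
rewrite mulrA [x ^+ n.+1]exprS mulrA; apply: eqI_Mr; apply: eqI_sym; exact: Cm_comm.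
Qed.

Definition Tb (x y : R) n := \sum_(i < n.+1) (x ^+ (n - i) * y ^+ i) *+ 'C(n, i).

Lemma pascal x y n :
  \sum_(i < n.+1) (x ^+ (n.+1 - i) * y ^+ i) *+ 'C(n, i)
  + \sum_(i < n.+1) (x ^+ (n - i) * y ^+ i.+1) *+ 'C(n, i)
  = Tb x y n.+1.
Proof.
rewrite /Tb big_ord_recl [X in _ = X]big_ord_recl -addrA; congr (_ + _); first by rewrite !bin0.
have -> : \sum_(i < n.+1) (x ^+ (n.+1 - bump 0 i) * y ^+ bump 0 i) *+ 'C(n.+1, bump 0 i)
  = \sum_(i < n.+1) (x ^+ (n - i) * y ^+ i.+1) *+ 'C(n, i.+1)
    + \sum_(i < n.+1) (x ^+ (n - i) * y ^+ i.+1) *+ 'C(n, i).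
  rewrite -big_split /=; apply: eq_bigr => i _.
  by rewrite /bump /= add1n subSS binS mulrnDr.
congr (_ + _); rewrite [in RHS]big_ord_recr /= bin_small // mulr0n addr0.
by apply: eq_bigr => i _; rewrite /bump /= add1n subSS.
Qed.

Lemma binom_step x y n :
  (x + y) * Tb x y n = Tb x y n.+1 + \sum_(i < n.+1) (cm y (x ^+ (n - i)) * y ^+ i) *+ 'C(n, i).
Proof.
rewrite -pascal /Tb mulrDl !big_distrr /= -addrA; congr (_ + _).
  apply: eq_bigr => i _; rewrite mulrnAr mulrA -exprS subSn //.
  by rewrite -ltnS.
rewrite -big_split /=; apply: eq_bigr => i _.
rewrite mulrnAr -mulrnDl; congr (_ *+ _).
by rewrite /comm mulrBl exprS !mulrA addrC subrK.
Qed.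

Section Binom.
Variables (c a b : R).
Definition Jc z := forall X Y, I (c * (X * z * Y)).

Lemma Jc_add z1 z2 : Jc z1 -> Jc z2 -> Jc (z1 + z2).
Proof. by move=> H1 H2 X Y; rewrite mulrDr mulrDl mulrDr; apply: ID. Qed.
Lemma Jc_opp z : Jc z -> Jc (- z).
Proof. by move=> H X Y; rewrite mulrN mulNr mulrN; apply: IN. Qed.
Lemma Jc_Ml z w : Jc z -> Jc (w * z).
Proof. by move=> H X Y; have := H (X * w) Y; rewrite !mulrA. Qed.
Lemma Jc_Mr z w : Jc z -> Jc (z * w).
Proof. by move=> H X Y; have := H X (w * Y); rewrite !mulrA. Qed.
Lemma Jc_Mn z n : Jc z -> Jc (z *+ n).
Proof.
move=> H; elim: n => [|n IH]; last by rewrite mulrS; apply: Jc_add.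
by move=> X Y; rewrite mulr0n mulr0 mul0r mulr0.
Qed.
Lemma Jc_sum (J : Type) (r : seq J) (F : J -> R) :
  (forall j, Jc (F j)) -> Jc (\sum_(j <- r) F j).
Proof.
move=> H; elim: r => [|x r IH]; last by rewrite big_cons; apply: Jc_add.
by rewrite big_nil => X Y; rewrite mulr0 mul0r mulr0.
Qed.

Hypothesis Hab : forall X, I (c * X * cm a b).

Lemma Jc_ab : Jc (cm a b).
Proof. by move=> X Y; rewrite !mulrA; apply: IMr; apply: Hab. Qed.

Lemma Jc_pow k : Jc (cm b (a ^+ k)).
Proof.
elim: k => [|k IH]; first by rewrite expr0 /comm mulr1 mul1r subrr => X Y; rewrite mulr0 mul0r mulr0.
rewrite exprS commMr; apply: Jc_add; last exact: Jc_Ml.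
by apply: Jc_Mr; rewrite commN; apply: Jc_opp; exact: Jc_ab.
Qed.

Lemma Jc_binom n : Jc ((a + b) ^+ n - Tb a b n).
Proof.
elim: n => [|n IH].
  rewrite /Tb big_ord_recl big_ord0 expr0 subn0 !expr0 mulr1 bin0 addr0 subrr.
  by move=> X Y; rewrite mulr0 mul0r mulr0.
have -> : (a + b) ^+ n.+1 - Tb a b n.+1 = (a + b) * ((a + b) ^+ n - Tb a b n)
   + \sum_(i < n.+1) (cm b (a ^+ (n - i)) * b ^+ i) *+ 'C(n, i).
  by rewrite mulrBr binom_step exprS opprD !addrA subrK.
apply: Jc_add; first exact: Jc_Ml.
by apply: Jc_sum => i; apply: Jc_Mn; apply: Jc_Mr; apply: Jc_pow.
Qed.

Lemma binom_I n : c * (a + b) ^+ n =I c * Tb a b n.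
Proof. by rewrite /eqI -mulrBr; have := Jc_binom n 1 1; rewrite mul1r mulr1. Qed.
End Binom.

Lemma Cm_sandwich c d X : Cm c -> I (c * d) -> I (c * X * d).
Proof.
move=> Hc Hd; have -> : c * X * d = cm c X * d + X * (c * d).
  by rewrite mulrA -mulrDl /comm subrK.
by apply: ID; [apply: IMr; apply: Hc|apply: IMl].
Qed.

Section Core.
Variables (a b w : R) (q : nat) (d : nat -> nat).
Hypothesis Hd1 : forall i, (i < q)%N -> (i.+1 * d i = 'C(q, i))%N.
Hypothesis Hd2 : forall i, (i < q)%N -> ((q - i) * d i = 'C(q, i.+1))%N.

Definition ff := \sum_(i < q) (a ^+ (q - i) * b ^+ i.+1) *+ d i.

Lemma core_E1 : kap q (a + b) w - kap q a w - kap q b w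
  = (cm a w * ((a + b) ^+ q - a ^+ q) + cm b w * ((a + b) ^+ q - b ^+ q)) * w ^+ q.
Proof.
rewrite /kap commDl -!mulrBl; congr (_ * _).
rewrite mulrDl !mulrBr [in RHS]addrA; congr (_ - _).
by rewrite addrAC.
Qed.

Lemma core_Tl : Tb a b q - a ^+ q
  = \sum_(i < q) (a ^+ (q - i.+1) * b ^+ i.+1) *+ 'C(q, i.+1).
Proof.
rewrite /Tb big_ord_recl /= subn0 expr0 mulr1 bin0 mulr1n addrAC subrr add0r.
by apply: eq_bigr => i _; rewrite /bump /= add1n.
Qed.

Lemma core_Tr : Tb a b q - b ^+ q
  = \sum_(i < q) (a ^+ (q - i) * b ^+ i) *+ 'C(q, i).
Proof. by rewrite /Tb big_ord_recr /= subnn expr0 mul1r binn mulr1n addrK. Qed.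

Lemma core_f : cm ff w =I
  \sum_(i < q) ((cm a w * (a ^+ (q - i.+1) * b ^+ i.+1)) *+ 'C(q, i.+1)
               + (cm b w * (a ^+ (q - i) * b ^+ i)) *+ 'C(q, i)).
Proof.
rewrite /ff commsuml; apply: eqI_sum => i.
rewrite commMnl commMl mulrnDl addrC; apply: eqI_D.
  rewrite -(Hd2 i (ltn_ord i)) mulrnA; apply: eqI_Mn.
  rewrite -(subnSK (ltn_ord i)).
  apply: eqI_trans (eqI_Mr _ _ _ (comm_exp _ _ _)) _.
  by rewrite mulrnAl -mulrA; apply: eqI_refl.
rewrite -(Hd1 i (ltn_ord i)) mulrnA; apply: eqI_Mn.
apply: eqI_trans (eqI_Ml _ _ _ (comm_exp _ _ _)) _.
rewrite mulrnAr; apply: eqI_Mn.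
rewrite !mulrA; apply: eqI_Mr; apply: eqI_sym; exact: Cm_comm.
Qed.

Lemma core_odd : kap q (a + b) w - kap q a w - kap q b w =I cm ff w * w ^+ q.
Proof.
rewrite core_E1; apply: eqI_Mr.
have Ha : forall X, I (cm a w * X * cm a b).
  by move=> X; apply: Cm_sandwich; [exact: Cm_comm| exact: F2].
have Hb : forall X, I (cm b w * X * cm a b).
  move=> X; apply: Cm_sandwich; first exact: Cm_comm.
  by rewrite (commN b a) mulrN; apply: IN; apply: F2.
apply: eqI_trans; first apply: eqI_D.
- by rewrite mulrBr; apply: eqI_B; [exact: binom_I|exact: eqI_refl].
- by rewrite mulrBr; apply: eqI_B; [exact: binom_I|exact: eqI_refl].
rewrite -!mulrBr core_Tl core_Tr; apply: eqI_sym; apply: eqI_trans core_f _.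
rewrite big_split /= !big_distrr /=; apply: eqI_eq; congr (_ + _).
  by apply: eq_bigr => i _; rewrite mulrnAr.
by apply: eq_bigr => i _; rewrite mulrnAr.
Qed.
End Core.

Lemma conj_comm P Q X w : Cm P -> Cm Q -> cm (P * X * Q) w =I P * cm X w * Q.
Proof.
move=> HP HQ; rewrite commMl commMl /eqI mulrDl.
have -> : P * X * cm Q w + (P * cm X w * Q + cm P w * X * Q) - P * cm X w * Q
   = P * X * cm Q w + cm P w * X * Q.
  by rewrite [P * cm X w * Q + _]addrC addrA addrK.
apply: ID; [apply: IMl; apply: HQ| apply: IMr; apply: IMr; apply: HP].
Qed.

Lemma comm_fw f w n : cm (f * w ^+ n) w = cm f w * w ^+ n.
Proof. by rewrite commMl /comm -exprS -exprSr subrr mulr0 add0r. Qed.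

Lemma core_even a b w q d :
  (forall i, (i < q)%N -> (i.+1 * d i = 'C(q, i))%N) ->
  (forall i, (i < q)%N -> ((q - i) * d i = 'C(q, i.+1))%N) ->
  kap q w (a + b) - kap q w a - kap q w b =I - (cm (ff a b q d) w * w ^+ q).
Proof.
move=> H1 H2; apply: eqI_trans _ (eqI_N _ _ (core_odd _ _ _ _ _ H1 H2)).
apply: (@eqI_trans _ (- kap q (a + b) w - - kap q a w - - kap q b w)).
  by apply: eqI_B; first apply: eqI_B; exact: kappa_swap.
by apply: eqI_eq; rewrite !opprD !opprK.
Qed.

Lemma prod_split (G : nat -> R) m r0 : (r0 < m)%N ->
  \prod_(r < m) G r = (\prod_(0 <= r < r0) G r) * (G r0 * \prod_(r0.+1 <= r < m) G r).
Proof.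
move=> H; rewrite -(big_mkord xpredT) (@big_cat_nat _ _ _ r0 0 m) //=; last exact: ltnW.
by rewrite (big_ltn H).
Qed.

Lemma sandw (P A B C Q : R) :
  P * (A * Q) - (P * (B * Q) + P * (C * Q)) = P * (A - B - C) * Q.
Proof. by rewrite !mulrA !mulrBr !mulrBl opprD addrA. Qed.

Lemma mulNr_help (P X Q : R) : - (P * X * Q) = P * (- X) * Q.
Proof. by rewrite mulrN mulNr. Qed.

Definition W q m (u : nat -> R) := \prod_(r < m) kap q (u (2 * r).+1) (u (2 * r).+2).

Lemma main_abstract q d m (u : nat -> R) v i :
  (forall i, (i < q)%N -> (i.+1 * d i = 'C(q, i))%N) ->
  (forall i, (i < q)%N -> ((q - i) * d i = 'C(q, i.+1))%N) ->
  (1 <= i <= 2 * m)%N ->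
  exists Y Z, W q m (fun j => if j == i then u i + v else u j)
     - (W q m u + W q m (fun j => if j == i then v else u j)) =I cm Y Z.
Proof.
move=> H1 H2 hi.
have [r0 [Hr0 Hi]] : exists r0, (r0 < m)%N /\ (i = (2 * r0).+1 \/ i = (2 * r0).+2).
  exists (i.-1 %/ 2)%N; split; first lia.
  have := divn_eq i.-1 2; have : (i.-1 %% 2 < 2)%N by rewrite ltn_mod.
  lia.
set u1 := fun j => if j == i then u i + v else u j.
set u2 := fun j => if j == i then v else u j.
set G := fun (w : nat -> R) r => kap q (w (2 * r).+1) (w (2 * r).+2).
have EP : forall w, (forall j, j != i -> w j = u j) ->
    \prod_(0 <= r < r0) G w r = \prod_(0 <= r < r0) G u r.
  move=> w Hw; apply: eq_big_nat => r /andP [_ Hr].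
  by rewrite /G !Hw //; apply/eqP; lia.
have EQ : forall w, (forall j, j != i -> w j = u j) ->
    \prod_(r0.+1 <= r < m) G w r = \prod_(r0.+1 <= r < m) G u r.
  move=> w Hw; apply: eq_big_nat => r /andP [Hr _].
  by rewrite /G !Hw //; apply/eqP; lia.
have H1w : forall j, j != i -> u1 j = u j by move=> j /negbTE; rewrite /u1 => ->.
have H2w : forall j, j != i -> u2 j = u j by move=> j /negbTE; rewrite /u2 => ->.
rewrite /W (prod_split (G u1) m r0 Hr0) (prod_split (G u) m r0 Hr0) (prod_split (G u2) m r0 Hr0).
rewrite (EP _ H1w) (EP _ H2w) (EQ _ H1w) (EQ _ H2w).
set P := \prod_(0 <= r < r0) G u r.
set Q := \prod_(r0.+1 <= r < m) G u r.
have CP : Cm P by apply: Cm_prod => r; apply: kappa_central.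
have CQ : Cm Q by apply: Cm_prod => r; apply: kappa_central.
have -> : P * (G u1 r0 * Q) - (P * (G u r0 * Q) + P * (G u2 r0 * Q))
    = P * (G u1 r0 - G u r0 - G u2 r0) * Q.
  exact: sandw.
rewrite /G; case: Hi => Hi.
- have e1 : (2 * r0).+2 != i by apply/eqP; lia.
  have E1 : u1 (2 * r0).+1 = u i + v by rewrite /u1 -Hi eqxx.
  have E2 : u2 (2 * r0).+1 = v by rewrite /u2 -Hi eqxx.
  rewrite (H1w _ e1) (H2w _ e1) E1 E2.
  set w := u (2 * r0).+2; rewrite -Hi.
  exists (P * (ff (u i) v q d * w ^+ q) * Q), w.
  apply: eqI_trans; last first.
    by apply: eqI_sym; apply: conj_comm.
  rewrite comm_fw; apply: eqI_Mr; apply: eqI_Ml; exact: core_odd.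
- have e1 : (2 * r0).+1 != i by apply/eqP; lia.
  have E1 : u1 (2 * r0).+2 = u i + v by rewrite /u1 -Hi eqxx.
  have E2 : u2 (2 * r0).+2 = v by rewrite /u2 -Hi eqxx.
  rewrite (H1w _ e1) (H2w _ e1) E1 E2.
  set w := u (2 * r0).+1; rewrite -Hi.
  exists w, (P * (ff (u i) v q d * w ^+ q) * Q).
  rewrite commN.
  apply: eqI_trans; last first.
    by apply: eqI_N; apply: eqI_sym; apply: conj_comm.
  rewrite comm_fw [X in eqI _ X]mulNr_help; apply: eqI_Mr; apply: eqI_Ml; exact: core_even.
Qed.

End Alg.

Section Final.
Variable k : fieldType.
Local Notation A := (FreeAlg k).

Lemma comm_morph (phi : {lrmorphism A -> A}) x y : phi (comm x y) = comm (phi x) (phi y).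
Proof. by rewrite /comm rmorphB !rmorphM. Qed.

Definition u3 (x y z : A) (j : nat) : A := if j == 1%N then x else if j == 2%N then y else z.

Lemma T3_0 : @T3 k 0.
Proof. by move=> V [[[H0 _ _] _] _] _. Qed.
Lemma T3_add a b : @T3 k a -> @T3 k b -> @T3 k (a + b).
Proof. move=> Ha Hb V HV HG; have [[[_ HD _] _] _] := HV; apply: HD; [exact: Ha|exact: Hb]. Qed.
Lemma T3_opp a : @T3 k a -> @T3 k (- a).
Proof.
move=> Ha V HV HG; have [[[_ _ HZ] _] _] := HV; rewrite -scaleN1r; apply: HZ; exact: Ha.
Qed.
Lemma T3_Ml a b : @T3 k b -> @T3 k (a * b).
Proof. by move=> Hb V HV HG; have [_ HI] := HV; have [] := HI a b (Hb V HV HG). Qed.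
Lemma T3_Mr a b : @T3 k b -> @T3 k (b * a).
Proof. by move=> Hb V HV HG; have [_ HI] := HV; have [] := HI a b (Hb V HV HG). Qed.
Lemma T3_3 x y z : @T3 k (comm (comm x y) z).
Proof.
move=> V [[_ HE] _] HG.
have := HE (@substL k (u3 x y z)) _ (HG _ erefl).
by rewrite !comm_morph !substL_x.
Qed.
Lemma S2_comm x y : @S2 k (comm x y).
Proof.
move=> V [_ HE] HG.
have := HE (@substL k (u3 x y x)) _ (HG _ erefl).
by rewrite !comm_morph !substL_x.
Qed.
End Final.

Lemma dfacts (p : nat) : prime p ->
  (forall i, (i < p.-1)%N -> (i.+1 * ('C(p.-1.+1, i.+1) %/ p.-1.+1) = 'C(p.-1, i))%N) /\
  (forall i, (i < p.-1)%N -> ((p.-1 - i) * ('C(p.-1.+1, i.+1) %/ p.-1.+1) = 'C(p.-1, i.+1))%N).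
Proof.
move=> pp; have p0 := prime_gt0 pp; rewrite (ltn_predK (prime_gt1 pp)).
have Hdv : forall i, (i < p.-1)%N -> (p %| 'C(p, i.+1))%N.
  by move=> i Hi; apply: prime_dvd_bin => //; apply/andP; split => //; lia.
split => i Hi.
  apply/eqP; rewrite -(eqn_pmul2r p0) -mulnA divnK ?Hdv //.
  by rewrite -mul_bin_diag mulnC.
apply/eqP; rewrite -(eqn_pmul2r p0) -mulnA divnK ?Hdv //.
have -> : (p.-1 - i = p - i.+1)%N by lia.
by rewrite -mul_bin_down mulnC.
Qed.

Theorem corollary2p2 (k : fieldType) (p : nat) (p_prime : prime p)
  (charp : p \in [pchar k]) (p_gt2 : (2 < p)%N)
  (m : nat) (m_ge1 : (1 <= m)%N) (u : nat -> FreeAlg k) (v : FreeAlg k)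
  (i : nat) (hi : (1 <= i <= 2 * m)%N) :
  S2_plus_T3
    (wm p m (fun j => if j == i then u i + v else u j)
     - (wm p m u + wm p m (fun j => if j == i then v else u j))).
Proof.
have [H1 H2] := dfacts _ p_prime.
have := @main_abstract _ (@T3 k) (@T3_0 k) (@T3_add k) (@T3_opp k) (@T3_Ml k) (@T3_Mr k)
  (@T3_3 k) p.-1 _ m u v i H1 H2 hi.
move=> [Y [Z H]].
exists (comm Y Z), (wm p m (fun j => if j == i then u i + v else u j)
     - (wm p m u + wm p m (fun j => if j == i then v else u j)) - comm Y Z).
split; first exact: S2_comm.
by split; [exact: H | rewrite [RHS]addrC subrK].
Qed.
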